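(* Let $\psi$ be a formula not containing $\mathbin{\&}$, let $I$ be an interpretation that interprets equality as identity, and let $\sigma$ be an assignment with $\sigma,I\models_P\psi$ and $MFA(\sigma)$. Then there exists an assignment $\sigma^\ddagger\subseteq\sigma$ such that $\sigma^\ddagger,I\models_S\psi^S\mathbin{\&}SFA(\psi)$.
   Context: Fix a set $\mathcal X$ of synchronisation variables and, for each $x\in\mathcal X$, a distinct data flow variable $\hat x$; $\hat{\mathcal X}=\{\hat x: x\in\mathcal X\}$. Fix function symbols $\mathcal F$ and predicate symbols $\mathcal P$ (with arities), $\mathcal P$ containing binary equality $=$; $\mathcal D$ is the set of ground terms over $\mathcal F$. Formulas: $\psi ::= \top \mid x \mid \psi_1\wedge\psi_2 \mid \psi_1\mathbin{\&}\psi_2 \mid \neg\psi \mid p(t_1,\dots,t_n)$, terms $t ::= \hat x \mid f(t_1,\dots,t_n)$. $\mathrm{fv}(\psi)$ is the set of variables of $\mathcal X\cup\hat{\mathcal X}$ occurring in $\psi$; $V(\psi)=\{x\in\mathcal X: x\in\mathrm{fv}(\psi)\text{ or }\hat x\in\mathrm{fv}(\psi)\}$. An assignment $\sigma$ is a partial map sending $x\in\mathcal X$ to $\{\mathrm{true},\mathrm{false}\}$ and $\hat x$ to $\mathcal D$; $\sigma\subseteq\sigma'$ means $\sigma'$ extends $\sigma$. An interpretation $I$ is a partial map from pairs $(p,(d_1,\dots,d_n))$ ($d_i\in\mathcal D$) to $\{\mathrm{true},\mathrm{false}\}$; it interprets equality as identity if $I(=,(d,d'))$ is $\mathrm{true}$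 when $d=d'$ and $\mathrm{false}$ otherwise. $\mathrm{Val}_\sigma(\hat x)=\sigma(\hat x)$, $\mathrm{Val}_\sigma(f(\vec t))=f(\mathrm{Val}_\sigma(t_1),\dots)$, undefined if an argument is. Partial satisfaction $\models_P$ / dissatisfaction $\mathrel{=\!\!|}_P$ (for $\mathbin{\&}$-free formulas): $\models_P\top$ always; $\models_P x$ iff $\sigma(x)=\mathrm{true}$; $\models_P\psi_1\wedge\psi_2$ iff both; $\models_P\neg\psi$ iff $\mathrel{=\!\!|}_P\psi$; $\models_P p(\vec t)$ iff all $\mathrm{Val}_\sigma(t_i)$ defined and $I(p,(\mathrm{Val}_\sigma(t_i))_i)=\mathrm{true}$; $\mathrel{=\!\!|}_P\top$ never; $\mathrel{=\!\!|}_P x$ iff $\sigma(x)=\mathrm{false}$; $\mathrel{=\!\!|}_P\psi_1\wedge\psi_2$ iff one conjunct is dissatisfied; $\mathrel{=\!\!|}_P\neg\psi$ iff $\models_P\psi$; $\mathrel{=\!\!|}_P p(\vec t)$ iff all values defined and $I(\dots)=\mathrm{false}$. $MFA(\sigma)$: for all $x\in\mathcal X$, $\sigma(\hat x)$ defined implies $\sigma(x)=\mathrm{true}$. Simple satisfaction $\models_S$ / dissatisfaction $\mathrel{=\!\!|}_S$ ($\sigma_1\frown\sigma_2$ means they agree on their common domain): $\sigma,I\models_S\top$ iff $\sigma=\emptyset$; $\models_S x$ iff $\sigma=\{x\mapsto\mathrm{true}\}$; $\models_S\psi_1\wedge\psi_2$ iff $\sigma=\sigma_1\cup\sigma_2$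 with $\sigma_1\frown\sigma_2$, $\sigma_i,I\models_S\psi_i$; $\models_S\psi_1\mathbin{\&}\psi_2$ iff $\sigma$ satisfies both; $\models_S\neg\psi$ iff $\mathrel{=\!\!|}_S\psi$; $\models_S p(\vec t)$ iff all values defined, $I(p,\dots)=\mathrm{true}$ and $\mathrm{dom}(\sigma)=\mathrm{fv}(p(\vec t))$. $\mathrel{=\!\!|}_S\top$ never; $\mathrel{=\!\!|}_S x$ iff $\sigma=\{x\mapsto\mathrm{false}\}$; $\sigma,I\mathrel{=\!\!|}_S\psi_1\wedge\psi_2$ iff for all $\sigma_1\frown\sigma_2$ with $\sigma=\sigma_1\cup\sigma_2$, $\sigma_1,I\mathrel{=\!\!|}_S\psi_1$ or $\sigma_2,I\mathrel{=\!\!|}_S\psi_2$; $\mathrel{=\!\!|}_S\psi_1\mathbin{\&}\psi_2$ iff $\sigma$ dissatisfies one; $\mathrel{=\!\!|}_S\neg\psi$ iff $\models_S\psi$; $\mathrel{=\!\!|}_S p(\vec t)$ iff all values defined, $I(\dots)=\mathrm{false}$ and $\mathrm{dom}(\sigma)=\mathrm{fv}(p(\vec t))$. $\psi_1\oplus\psi_2:=\neg(\neg\psi_1\mathbin{\&}\neg\psi_2)$; $SFA(x):=\top\oplus x\oplus\neg x\oplus(x\wedge(\hat x=\hat x))\oplus(\hat x=\hat x)$; $SFA(\psi):=\bigwedge_{x\in V(\psi)}SFA(x)$ (overlapping conjunction; $\top$ if $V(\psi)=\emptyset$). A subformula occurrence is in a negative position if it lies within the scope of an odd number of negations, otherwise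 positive; $\psi^S$ is obtained from $\psi$ by replacing every $\wedge$ in a negative position by $\mathbin{\&}$. *)

(* Defs.v *)
From mathcomp Require Import ssreflect ssrfun ssrbool eqtype ssrnat seq.
Set Implicit Arguments. Unset Strict Implicit. Unset Printing Implicit Defensive.

Section Logic.
(* X : synchronisation variables; the data flow variable \hat x is [x] used
   inside a term ([TVar x]).  F : function symbols, P : predicate symbols. *)
Variables (X : eqType) (F P : Type).

Inductive term : Type :=
| TVar : X -> term
| TApp : F -> list term -> term.

Inductive formula : Type :=
| FTop : formula
| FSync : X -> formula
| FAnd : formula -> formula -> formula
| FAmp : formula -> formula -> formula
| FNot : formula -> formula
| FPred : P -> list term -> formula.

(* ground terms over F : the data domain D *)
Inductive gterm : Type := GApp : F -> list gterm -> gterm.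

Variables (arF : F -> nat) (arP : P -> nat).

Fixpoint wf_term (t : term) : Prop :=
  match t with
  | TVar _ => True
  | TApp f ts => size ts = arF f /\
      (fix wfl (l : list term) : Prop :=
         match l with [::] => True | t :: l => wf_term t /\ wfl l end) ts
  end.

Fixpoint wf_terms (ts : list term) : Prop :=
  match ts with [::] => True | t :: l => wf_term t /\ wf_terms l end.

Fixpoint wf_formula (psi : formula) : Prop :=
  match psi with
  | FTop | FSync _ => True
  | FAnd a b | FAmp a b => wf_formula a /\ wf_formula b
  | FNot a => wf_formula a
  | FPred p ts => size ts = arP p /\ wf_terms ts
  end.

Fixpoint wf_gterm (d : gterm) : Prop :=
  match d with
  | GApp f ds => size ds = arF f /\
      (fix wfl (l : list gterm) : Prop :=
         match l with [::] => True | d :: l => wf_gterm d /\ wfl l end) ds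
  end.

Fixpoint amp_free (psi : formula) : Prop :=
  match psi with
  | FTop | FSync _ | FPred _ _ => True
  | FAnd a b => amp_free a /\ amp_free b
  | FAmp _ _ => False
  | FNot a => amp_free a
  end.

Fixpoint tvars (t : term) : list X :=
  match t with
  | TVar x => [:: x]
  | TApp _ ts =>
      (fix tvl (l : list term) : list X :=
         match l with [::] => [::] | t :: l => tvars t ++ tvl l end) ts
  end.

Definition tsvars (ts : list term) : list X := flatten (map tvars ts).

(* V(psi) as a list (with possible repetitions):
   x with x in fv(psi) or \hat x in fv(psi) *)
Fixpoint Vlist (psi : formula) : list X :=
  match psi with
  | FTop => [::]
  | FSync x => [:: x]
  | FAnd a b | FAmp a b => Vlist a ++ Vlist b
  | FNot a => Vlist a
  | FPred _ ts => tsvars ts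
  end.

(* assignments: partial maps x |-> bool and \hat x |-> D *)
Record assignment := Assign {
  sb : X -> option bool;
  sd : X -> option gterm
}.

Definition asub (s1 s2 : assignment) : Prop :=
  (forall x b, sb s1 x = Some b -> sb s2 x = Some b) /\
  (forall x d, sd s1 x = Some d -> sd s2 x = Some d).

Definition compat (s1 s2 : assignment) : Prop :=
  (forall x b1 b2, sb s1 x = Some b1 -> sb s2 x = Some b2 -> b1 = b2) /\
  (forall x d1 d2, sd s1 x = Some d1 -> sd s2 x = Some d2 -> d1 = d2).

Definition oplus {A} (o1 o2 : option A) : option A :=
  match o1 with Some a => Some a | None => o2 end.

Definition aunion (s1 s2 : assignment) : assignment :=
  Assign (fun x => oplus (sb s1 x) (sb s2 x)) (fun x => oplus (sd s1 x) (sd s2 x)).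

Definition aeq (s1 s2 : assignment) : Prop :=
  (forall x, sb s1 x = sb s2 x) /\ (forall x, sd s1 x = sd s2 x).

Definition MFA (s : assignment) : Prop :=
  forall x, sd s x <> None -> sb s x = Some true.

Definition interp := P -> list gterm -> option bool.

Variable eqsym : P.

Definition eq_identity (I : interp) : Prop :=
  forall d d', I eqsym [:: d; d'] = Some true /\ d = d' \/
               I eqsym [:: d; d'] = Some false /\ d <> d'.

Fixpoint Val (s : assignment) (t : term) : option gterm :=
  match t with
  | TVar x => sd s x
  | TApp f ts =>
      option_map (GApp f)
        ((fix vl (l : list term) : option (list gterm) :=
            match l with
            | [::] => Some [::]
            | t :: l => match Val s t, vl l with
                        | Some d, Some ds => Some (d :: ds)
                        | _, _ => None
                        end
            end) ts)
  end.

Fixpoint Vals (s : assignment) (ts : list term) : option (list gterm) :=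
  match ts with
  | [::] => Some [::]
  | t :: l => match Val s t, Vals s l with
              | Some d, Some ds => Some (d :: ds)
              | _, _ => None
              end
  end.

Variable I : interp.

(* partial satisfaction / dissatisfaction (for &-free formulas;
   the & case is never used) *)
Fixpoint satP (s : assignment) (psi : formula) : Prop :=
  match psi with
  | FTop => True
  | FSync x => sb s x = Some true
  | FAnd a b => satP s a /\ satP s b
  | FAmp _ _ => False
  | FNot a => dsatP s a
  | FPred p ts => exists ds, Vals s ts = Some ds /\ I p ds = Some true
  end
with dsatP (s : assignment) (psi : formula) : Prop :=
  match psi with
  | FTop => False
  | FSync x => sb s x = Some false
  | FAnd a b => dsatP s a \/ dsatP s b
  | FAmp _ _ => False
  | FNot a => satP s a
  | FPred p ts => exists ds, Vals s ts = Some ds /\ I p ds = Some false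
  end.

Definition dom_is_fv (s : assignment) (ts : list term) : Prop :=
  (forall x, sb s x = None) /\
  (forall x, sd s x <> None <-> x \in tsvars ts).

Definition is_empty (s : assignment) : Prop :=
  (forall x, sb s x = None) /\ (forall x, sd s x = None).

Definition is_single (x : X) (b : bool) (s : assignment) : Prop :=
  (forall y, sb s y = (if y == x then Some b else None)) /\
  (forall y, sd s y = None).

Fixpoint satS (s : assignment) (psi : formula) : Prop :=
  match psi with
  | FTop => is_empty s
  | FSync x => is_single x true s
  | FAnd a b => exists s1 s2, compat s1 s2 /\ aeq s (aunion s1 s2) /\
                              satS s1 a /\ satS s2 b
  | FAmp a b => satS s a /\ satS s b
  | FNot a => dsatS s a
  | FPred p ts => (exists ds, Vals s ts = Some ds /\ I p ds = Some true) /\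
                  dom_is_fv s ts
  end
with dsatS (s : assignment) (psi : formula) : Prop :=
  match psi with
  | FTop => False
  | FSync x => is_single x false s
  | FAnd a b => forall s1 s2, compat s1 s2 -> aeq s (aunion s1 s2) ->
                              dsatS s1 a \/ dsatS s2 b
  | FAmp a b => dsatS s a \/ dsatS s b
  | FNot a => satS s a
  | FPred p ts => (exists ds, Vals s ts = Some ds /\ I p ds = Some false) /\
                  dom_is_fv s ts
  end.

End Logic.

Arguments FTop {X F P}.

Definition FOplus {X : eqType} {F P : Type} (a b : formula X F P) :=
  FNot (FAmp (FNot a) (FNot b)).

Definition FEqSelf {X : eqType} {F P : Type} (eqsym : P) (x : X) : formula X F P :=
  FPred eqsym [:: TVar F x; TVar F x].

Definition SFAx {X : eqType} {F P : Type} (eqsym : P) (x : X) : formula X F P :=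
  FOplus FTop (FOplus (FSync F P x) (FOplus (FNot (FSync F P x))
    (FOplus (FAnd (FSync F P x) (FEqSelf (F:=F) eqsym x)) (FEqSelf (F:=F) eqsym x)))).

Fixpoint bigAnd {X : eqType} {F P : Type} (l : list (formula X F P)) : formula X F P :=
  match l with
  | [::] => FTop
  | [:: a] => a
  | a :: l => FAnd a (bigAnd l)
  end.

Definition SFA {X : eqType} {F P : Type} (eqsym : P) (psi : formula X F P) : formula X F P :=
  bigAnd (map (SFAx (F:=F) eqsym) (undup (Vlist psi))).

(* psi^S : every /\ in a negative position replaced by &.
   [pos] = true iff the current position is positive. *)
Fixpoint toS {X : eqType} {F P : Type} (pos : bool) (psi : formula X F P) : formula X F P :=
  match psi with
  | FTop => FTop
  | FSync x => FSync F P x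
  | FAnd a b => if pos then FAnd (toS pos a) (toS pos b)
                else FAmp (toS pos a) (toS pos b)
  | FAmp a b => FAmp (toS pos a) (toS pos b)
  | FNot a => FNot (toS (~~ pos) a)
  | FPred p ts => FPred p ts
  end.

Definition psiS {X : eqType} {F P : Type} (psi : formula X F P) := toS true psi.

(* Main.v *)
Require Import Defs.
From mathcomp Require Import ssreflect ssrfun ssrbool eqtype ssrnat seq.
Section S.
Variables (X : eqType) (F P : Type).
Implicit Types (s : assignment X F).

Lemma Val_TApp s f ts : Val s (TApp f ts) = option_map (GApp f) (Vals s ts).
Proof.
rewrite /=; congr option_map; by elim: ts => //= t ts ->.
Qed.
Lemma tvars_TApp f (ts : seq (term X F)) : tvars (TApp f ts) = tsvars ts.
Proof. by elim: ts => //= t ts IH; rewrite IH. Qed.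

Fixpoint term_ind2 (Q : term X F -> Prop) (Hv : forall x, Q (TVar F x))
  (Ha : forall f ts, foldr (fun t R => Q t /\ R) True ts -> Q (TApp f ts))
  (t : term X F) : Q t :=
  match t with
  | TVar x => Hv x
  | TApp f ts => Ha f ts ((fix go l : foldr (fun t R => Q t /\ R) True l :=
      match l return foldr (fun t R => Q t /\ R) True l with [::] => I | u :: l' => conj (term_ind2 Q Hv Ha u) (go l') end) ts)
  end.

Lemma Val_agree s1 s2 t : (forall x, x \in tvars t -> sd s1 x = sd s2 x) ->
  Val s1 t = Val s2 t.
Proof.
elim/term_ind2: t => [x H|f ts IH H]; first by apply: H; rewrite inE.
rewrite !Val_TApp; congr option_map; rewrite tvars_TApp in H.
elim: ts IH H => //= t ts IHts [Ht Hts] H.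
rewrite Ht; last by move=> x Hx; apply: H; rewrite mem_cat Hx.
rewrite IHts // => x Hx; apply: H; by rewrite /tsvars /= mem_cat Hx orbT.
Qed.

Lemma Val_def s t d : Val s t = Some d -> forall x, x \in tvars t -> sd s x <> None.
Proof.
elim/term_ind2: t d => [x|f ts IH] d H y.
  by rewrite inE => /eqP ->; rewrite /= in H; rewrite H.
rewrite Val_TApp tvars_TApp in H *.
case E: (Vals s ts) H => [ds|] //= _.
elim: ts ds IH E => //= t ts IHts ds [Ht Hts].
case E1: (Val s t) => [d1|] //; case E2: (Vals s ts) => [ds2|] // _.
rewrite /tsvars /= mem_cat => /orP [H|H].
  exact: Ht _ E1 _ H.
exact: IHts _ Hts E2 H.
Qed.

Lemma Vals_agree s1 s2 ts : (forall x, x \in tsvars ts -> sd s1 x = sd s2 x) ->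
  Vals s1 ts = Vals s2 ts.
Proof.
elim: ts => //= t ts IH H.
rewrite (Val_agree s1 s2); last by move=> x Hx; apply: H; rewrite /tsvars /= mem_cat Hx.
by rewrite IH // => x Hx; apply: H; rewrite /tsvars /= mem_cat Hx orbT.
Qed.

Lemma Vals_def s ts ds : Vals s ts = Some ds -> forall x, x \in tsvars ts -> sd s x <> None.
Proof.
elim: ts ds => //= t ts IH ds.
case E1: (Val s t) => [d1|] //; case E2: (Vals s ts) => [ds2|] // _ x.
rewrite /tsvars /= mem_cat => /orP [H|H]; [exact: Val_def E1 _ H | exact: IH E2 _ H].
Qed.

Definition dom_in s (l : seq X) := forall x, x \notin l -> sb s x = None /\ sd s x = None.

Lemma key (I : interp F P) (psi : formula X F P) : amp_free psi -> forall s,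
  (satP I s psi -> exists s', asub s' s /\ dom_in s' (Vlist psi) /\ satS I s' (toS true psi)) /\
  (dsatP I s psi -> exists s', asub s' s /\ dom_in s' (Vlist psi) /\ dsatS I s' (toS false psi)).
Proof.
elim: psi => [|x|a IHa b IHb|a IHa b IHb|a IHa|p ts] /= Hamp s.
- split=> // _; exists (Assign (fun _ => None) (fun _ => None)).
  by split; [split | split].
- split=> H.
  + exists (Assign (fun y => if y == x then Some true else None) (fun _ => None)).
    split; [split=> y c /=; [by case: eqP => [->|] // [<-] | by []]|].
    split; last by split.
    by move=> y /=; rewrite inE => /negbTE ->.
  + exists (Assign (fun y => if y == x then Some false else None) (fun _ => None)).
    split; [split=> y c /=; [by case: eqP => [->|] // [<-] | by []]|].
    split; last by split.
    by move=> y /=; rewrite inE => /negbTE ->.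
- case: Hamp => Ha Hb; split.
  + move=> [/(proj1 (IHa Ha s)) [s1 [[S1b S1d] [D1 H1]]] /(proj1 (IHb Hb s)) [s2 [[S2b S2d] [D2 H2]]]].
    exists (aunion s1 s2); split.
      split=> y c /=.
        by case E: (sb s1 y) => [c'|] //=; [move=> [<-]; exact: S1b | exact: S2b].
      by case E: (sd s1 y) => [c'|] //=; [move=> [<-]; exact: S1d | exact: S2d].
    split.
      move=> y; rewrite mem_cat negb_or => /andP [n1 n2].
      by rewrite /=; case: (D1 _ n1) => -> ->; case: (D2 _ n2) => -> ->.
    exists s1, s2; split; last by split; [split | split].
    split=> y c1 c2 E1 E2.
      by move: (S1b _ _ E1) (S2b _ _ E2) => -> [].
    by move: (S1d _ _ E1) (S2d _ _ E2) => -> [].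
  + move=> [/(proj2 (IHa Ha s)) | /(proj2 (IHb Hb s))] [s' [Hs [D H]]]; exists s';
      (split; [done | split; [move=> y; rewrite mem_cat negb_or => /andP [n1 n2]; auto|]]).
      by left.
    by right.
- by [].
- by split=> H; [case: (proj2 (IHa Hamp s) H) | case: (proj1 (IHa Hamp s) H)] => s' [? [? ?]];
    exists s'.
- have Hv : forall s, Vals s ts = Vals (Assign (fun _ => None)
      (fun x => if x \in tsvars ts then sd s x else None)) ts.
    by move=> s0; apply: Vals_agree => x /= ->.
  split=> [[ds [E Ip]] | [ds [E Ip]]];
  (exists (Assign (fun _ => None) (fun x => if x \in tsvars ts then sd s x else None));
   split; [split=> y c //=; by case: (y \in tsvars ts)|];
   split; [by move=> y /= /negbTE ->|];
   split; [exists ds; by rewrite -Hv |];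
   split=> // y /=; split; [by case: (y \in tsvars ts) | move=> Hy; rewrite Hy; exact: Vals_def E y Hy]).
Qed.

Lemma sfa_one (eqsym : P) (I : interp F P) (HI : eq_identity eqsym I) x s :
  dom_in s [:: x] -> (sb s x = Some false -> sd s x = None) ->
  satS I s (SFAx (F:=F) eqsym x).
Proof.
move=> D Hm.
have Dy : forall y, y != x -> sb s y = None /\ sd s y = None.
  by move=> y Hy; apply: D; rewrite inE.
have Idd : forall d, I eqsym [:: d; d] = Some true.
  by move=> d; case: (HI d d) => [[]|[_]] //.
rewrite /SFAx /FOplus /=.
case Eb: (sb s x) => [[]|]; case Ed: (sd s x) => [d|].
- do 3 right; left.
  exists (Assign (fun y => if y == x then Some true else None) (fun _ => None)),
         (Assign (fun _ => None) (fun y => if y == x then Some d else None)).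
  split; first by split=> y c1 c2 /=.
  split.
    split=> y /=; case: eqP => [->|/eqP ne]; rewrite ?Eb ?Ed //; by case: (Dy _ ne) => E1 E2; rewrite ?E1 ?E2.
  split; first by split=> //= y; case: eqP.
  split; first by exists [:: d; d]; rewrite /= eqxx.
  split=> // y /=; rewrite /tsvars /= !inE orbb.
  by case: eqP.
- right; left; split=> y; last by case: (y =P x) => [->|/eqP ne] //; case: (Dy _ ne).
  by case: (y =P x) => [->|/eqP ne] //; case: (Dy _ ne).
- by rewrite Hm in Ed.
- right; right; left; split=> y; last by case: (y =P x) => [->|/eqP ne] //; case: (Dy _ ne).
  by case: (y =P x) => [->|/eqP ne] //; case: (Dy _ ne).
- do 4 right.
  split; first by exists [:: d; d]; rewrite Idd.
  split; first by move=> y; case: (y =P x) => [->|/eqP ne] //; case: (Dy _ ne).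
  move=> y; rewrite /tsvars /= !inE orbb.
  case: (y =P x) => [->|/eqP ne]; first by rewrite Ed.
  by case: (Dy _ ne) => _ ->.
- left; split=> y; case: (y =P x) => [->|/eqP ne] //; by case: (Dy _ ne).
Qed.

Definition restr s (l : seq X) : assignment X F :=
  Assign (fun y => if y \in l then sb s y else None) (fun y => if y \in l then sd s y else None).

Lemma sfa_list (eqsym : P) (I : interp F P) (HI : eq_identity eqsym I) l s :
  dom_in s l -> (forall x, sb s x = Some false -> sd s x = None) ->
  satS I s (bigAnd (map (SFAx (F:=F) eqsym) l)).
Proof.
case: l => [|a l] D Hm.
  by split=> y; case: (D y).
elim: l a s D Hm => [|b l IH] a s D Hm.
  exact: (sfa_one eqsym I HI a s D (Hm a)).
rewrite [map _ _]/= [bigAnd _]/=.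
exists (restr s [:: a]), (restr s (b :: l)).
split.
  by split=> y c1 c2 /=; case: (y \in _) => //; case: (y \in _) => // -> [].
split.
  have Nn : forall y, (y \in [:: a]) = false -> (y \in b :: l) = false -> sb s y = None /\ sd s y = None.
    by move=> y Ha Hl; apply: D; rewrite in_cons -mem_seq1 Ha Hl.
  split=> y /=; case Ha: (y \in [:: a]); case Hl: (y \in b :: l); rewrite /=;
    try (by case: (sb s y)); try (by case: (sd s y)); by case: (Nn y Ha Hl) => E1 E2; rewrite ?E1 ?E2.
split.
  apply: sfa_one => //.
    by move=> y /= /negbTE ->.
  by rewrite /= mem_head => /Hm.
apply: IH.
  by move=> y /= /negbTE ->.
by move=> x /=; case: (x \in _) => // /Hm ->.
Qed.

End S.

Theorem mainTheorem6 (X : eqType) (F P : Type) (arF : F -> nat) (arP : P -> nat)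
  (eqsym : P) (Harity : arP eqsym = 2)
  (I : interp F P) (HI : eq_identity eqsym I)
  (psi : formula X F P) (Hwf : wf_formula arF arP psi) (Hamp : amp_free psi)
  (sigma : assignment X F)
  (Hsigwf : forall x d, sd sigma x = Some d -> wf_gterm arF d)
  (Hsat : satP I sigma psi) (Hmfa : MFA sigma) :
  exists sigma' : assignment X F, asub sigma' sigma /\
    satS I sigma' (FAmp (psiS psi) (SFA eqsym psi)).
Proof.
case: (proj1 (@key _ _ _ I _ Hamp sigma) Hsat) => s' [[Sb Sd] [D H]].
exists s'; split; first by split.
split; first exact: H.
apply: sfa_list => //.
  by move=> y; rewrite mem_undup; apply: D.
move=> x Ex; case Ed: (sd s' x) => [d|] //.
by have := Hmfa x; rewrite (Sd _ _ Ed) (Sb _ _ Ex) => /(_ ltac:(discriminate)).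
Qed.
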